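(* Let a group $G$ act isometrically on a proper geodesic metric space $X$ with basepoint $o$, let $F\subseteq G$ be a set of contracting elements, and let $C>0$ be such that $\mathrm{Ax}(f)$ is $C$-contracting for every $f\in F$. Let $M\ge C$, let $\gamma$ be a geodesic with both endpoints in $N_M(Go)$, and let $\alpha$ be a connected component of $\gamma\setminus N_M(Go)$. Then for any $\hat r>0$ there is a constant $L_2=L_2(\hat r,C)>0$ such that $\mathrm{diam}\big(\alpha\cap N_{\hat r}(h\,\mathrm{Ax}(f))\big)\le L_2$ for every $h\in G$ and $f\in F$.
   Context: $N_R(A)$ is the closed $R$-neighborhood. A closed $U$ is $C$-contracting if every geodesic $\gamma$ with $d(\gamma,U)\ge C$ has nearest-point projection $\pi_U(\gamma)$ of diameter $\le C$. An infinite-order $f$ is contracting if $n\mapsto f^no$ is a quasi-isometric embedding with contracting image. $E(f)=\{g\in G:\exists n>0,\ gf^ng^{-1}=f^{\pm n}\}$ and $\mathrm{Ax}(f)=E(f)\cdot o$ (so $\mathrm{Ax}(f)\subseteq Go$). *)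

(* Defs.v *)
From Stdlib Require Import Reals ZArith List.
Open Scope R_scope.

Set Implicit Arguments.

Section MetricNotions.
Variable X : Type.
Variable d : X -> X -> R.

Definition is_metric : Prop :=
  (forall x y, d x y = 0 <-> x = y) /\
  (forall x y, d x y = d y x) /\
  (forall x y z, d x z <= d x y + d y z).

Definition is_open (U : X -> Prop) : Prop :=
  forall x, U x -> exists eps, 0 < eps /\ forall y, d x y < eps -> U y.

Definition is_closed (A : X -> Prop) : Prop :=
  is_open (fun x => ~ A x).

Definition is_compact (K : X -> Prop) : Prop :=
  forall (I : Type) (U : I -> X -> Prop),
    (forall i, is_open (U i)) ->
    (forall x, K x -> exists i, U i x) ->
    exists l : list I, forall x, K x -> exists i, In i l /\ U i x.

Definition is_proper : Prop :=
  forall x r, is_compact (fun y => d x y <= r).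

Definition is_interval (I : R -> Prop) : Prop :=
  forall s t u, I s -> I u -> s <= t <= u -> I t.

Definition geodesic_on (I : R -> Prop) (gam : R -> X) : Prop :=
  is_interval I /\ forall s t, I s -> I t -> d (gam s) (gam t) = Rabs (s - t).

Definition seg (a b : R) : R -> Prop := fun t => a <= t <= b.

Definition is_geodesic_space : Prop :=
  forall x y, exists a b (gam : R -> X),
    a <= b /\ geodesic_on (seg a b) gam /\ gam a = x /\ gam b = y.

(* closed R-neighbourhood: d(x, A) = inf_{a in A} d(x,a) <= R *)
Definition nbhd (Rad : R) (A : X -> Prop) : X -> Prop :=
  fun x => forall eps, 0 < eps -> exists a, A a /\ d x a < Rad + eps.

Definition proj (U : X -> Prop) (x : X) : X -> Prop :=
  fun u => U u /\ forall u', U u' -> d x u <= d x u'.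

Definition diam_le (A : X -> Prop) (L : R) : Prop :=
  forall x y, A x -> A y -> d x y <= L.

Definition contracting (C : R) (U : X -> Prop) : Prop :=
  is_closed U /\
  forall (I : R -> Prop) (gam : R -> X),
    geodesic_on I gam ->
    (forall t u, I t -> U u -> C <= d (gam t) u) ->
    diam_le (fun p => exists t x, I t /\ x = gam t /\ proj U x p) C.

End MetricNotions.

Section GroupNotions.
Variable G : Type.
Variables (mul : G -> G -> G) (one : G) (inv : G -> G).

Definition is_group : Prop :=
  (forall a b c, mul a (mul b c) = mul (mul a b) c) /\
  (forall a, mul one a = a /\ mul a one = a) /\
  (forall a, mul (inv a) a = one /\ mul a (inv a) = one).

Fixpoint npow (g : G) (n : nat) : G :=
  match n with O => one | S k => mul g (npow g k) end.

Definition zpow (g : G) (z : Z) : G :=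
  match z with
  | Z0 => one
  | Zpos p => npow g (Pos.to_nat p)
  | Zneg p => inv (npow g (Pos.to_nat p))
  end.

Variable X : Type.
Variable d : X -> X -> R.
Variable act : G -> X -> X.

Definition isometric_action : Prop :=
  (forall x, act one x = x) /\
  (forall g h x, act (mul g h) x = act g (act h x)) /\
  (forall g x y, d (act g x) (act g y) = d x y).

Variable o : X.

Definition orbit : X -> Prop := fun x => exists g, x = act g o.

Definition contracting_element (f : G) : Prop :=
  (forall n : nat, (0 < n)%nat -> npow f n <> one) /\
  (exists lam c, 1 <= lam /\ 0 <= c /\
     forall m n : Z,
       Rabs (IZR (m - n)) / lam - c <= d (act (zpow f m) o) (act (zpow f n) o) /\
       d (act (zpow f m) o) (act (zpow f n) o) <= lam * Rabs (IZR (m - n)) + c) /\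
  (exists C', contracting d C' (fun x => exists n : Z, x = act (zpow f n) o)).

Definition elem_E (f g : G) : Prop :=
  exists n : nat, (0 < n)%nat /\
    (mul (mul g (npow f n)) (inv g) = npow f n \/
     mul (mul g (npow f n)) (inv g) = inv (npow f n)).

Definition Ax (f : G) : X -> Prop := fun x => exists g, elem_E f g /\ x = act g o.

Definition translate (h : G) (A : X -> Prop) : X -> Prop :=
  fun x => exists y, A y /\ x = act h y.

End GroupNotions.

Definition interval_component (S J : R -> Prop) : Prop :=
  (exists t, J t) /\ is_interval J /\ (forall t, J t -> S t) /\
  (forall J', is_interval J' -> (forall t, J t -> J' t) -> (forall t, J' t -> S t) ->
     forall t, J' t -> J t).

(* Main.v *)
Require Import Defs.
From Stdlib Require Import Reals ZArith List.
From Stdlib Require Import Lra Lia Classical.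
Open Scope R_scope.

Lemma max_list : forall l n, In n l -> (n <= fold_right Nat.max 0 l)%nat.
Proof. induction l; simpl; intros n H; [contradiction|]. destruct H as [->|H]; [lia|]. specialize (IHl n H). lia. Qed.

Lemma open_gt X (d : X -> X -> R) : is_metric d -> forall z c, is_open d (fun y => c < d z y).
Proof.
  intros [H0 [Hs Ht]] z c x Hx. exists (d z x - c). split; [lra|].
  intros y Hy. pose proof (Ht z y x). rewrite (Hs y x) in H. lra.
Qed.

Lemma proj_exists X (d : X -> X -> R) (U : X -> Prop) :
  is_metric d -> is_proper d -> is_closed d U -> forall z u0, U u0 -> exists p, proj d U z p.
Proof.
  intros Hm Hp Hc z u0 Hu0.
  pose proof Hm as [H0 [Hs Ht]].
  assert (nonneg : forall x y, 0 <= d x y).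
  { intros x y. pose proof (Ht x y x). rewrite (Hs y x) in H.
    assert (d x x = 0) by (apply H0; reflexivity). lra. }
  set (E := fun r => exists u, U u /\ r = - d z u).
  destruct (completeness E) as [m [Hub Hlub]].
  { exists 0. intros r [u [_ ->]]. specialize (nonneg z u). lra. }
  { exists (- d z u0). exists u0. auto. }
  set (D := - m).
  assert (HD : forall u, U u -> D <= d z u).
  { intros u Hu. assert (E (- d z u)) by (exists u; auto). specialize (Hub _ H). unfold D; lra. }
  assert (Happ : forall e, 0 < e -> exists u, U u /\ d z u < D + e).
  { intros e He. destruct (classic (exists u, U u /\ d z u < D + e)) as [|Hn]; auto.
    exfalso. assert (is_upper_bound E (m - e)).
    { intros r [u [Hu ->]]. destruct (Rle_dec (- d z u) (m - e)); auto.
      exfalso; apply Hn; exists u; split; auto; unfold D; lra. }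
    specialize (Hlub _ H). lra. }
  destruct (classic (exists p, proj d U z p)) as [|Hno]; auto. exfalso.
  assert (Hgt : forall u, U u -> D < d z u).
  { intros u Hu. destruct (HD u Hu) as [|Heq]; auto. exfalso. apply Hno. exists u.
    split; auto. intros u' Hu'. rewrite <- Heq. auto. }
  set (V := fun n : nat => match n with O => fun y => ~ U y
                     | S n => fun y => D + / INR (S n) < d z y end).
  destruct (Hp z (D + 1) nat V) as [l Hl].
  { intros [|n]; [exact Hc| apply open_gt; auto]. }
  { intros y _. destruct (classic (U y)) as [Hy|Hy]; [|exists O; exact Hy].
    specialize (Hgt y Hy). destruct (archimed_cor1 (d z y - D)) as [N [HN1 HN2]]; [lra|].
    destruct N as [|n]; [exfalso; inversion HN2|]. exists (S n). change (D + / INR (S n) < d z y). lra. }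
  set (N := fold_right Nat.max 0%nat l).
  assert (Hdp : 0 < / INR (S N)) by (apply Rinv_0_lt_compat; apply lt_0_INR; lia).
  destruct (Happ (Rmin 1 (/ INR (S N)))) as [u [Hu Hdu]].
  { apply Rmin_glb_lt; lra. }
  pose proof (Rmin_l 1 (/ INR (S N))). pose proof (Rmin_r 1 (/ INR (S N))).
  destruct (Hl u) as [[|n] [Hin Hv]]; [lra| |].
  - exact (Hv Hu).
  - change (D + / INR (S n) < d z u) in Hv. pose proof (max_list l (S n) Hin). fold N in H1.
    assert (/ INR (S N) <= / INR (S n)).
    { apply Rinv_le_contravar; [apply lt_0_INR; lia| apply le_INR; lia]. }
    lra.
Qed.

Lemma core X (d : X -> X -> R) G (mul : G -> G -> G) (one : G) (inv : G -> G)
  (act : G -> X -> X) (o : X) (U : X -> Prop) C rhat M (gam : R -> X) (I : R -> Prop) h s t :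
  is_metric d -> is_proper d -> is_group mul one inv -> isometric_action mul one d act ->
  contracting d C U -> (forall u, U u -> orbit act o u) -> C <= M ->
  is_interval I -> (forall r r', I r -> I r' -> d (gam r) (gam r') = Rabs (r - r')) ->
  (forall r, I r -> ~ nbhd d M (orbit act o) (gam r)) ->
  I s -> I t -> s <= t -> nbhd d rhat (translate act h U) (gam s) ->
  nbhd d rhat (translate act h U) (gam t) -> d (gam s) (gam t) <= 2 * rhat + C.
Proof.
  intros Hm Hp [Ha [Hid Hinv]] [Hone [Hmul Hiso]] [Hcl Hcon] HUo HCM HI Hgeo Hfar Is It Hst Ns Nt.
  pose proof Hm as [H0 [Hs Ht]].
  assert (Hback : forall x, act h (act (inv h) x) = x).
  { intro x. rewrite <- Hmul. destruct (Hinv h) as [_ ->]. apply Hone. }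
  assert (Hdt : forall u x, d (act (inv h) x) u = d x (act h u)).
  { intros u x. rewrite <- (Hiso h). rewrite Hback. reflexivity. }
  set (gam' := fun r => act (inv h) (gam r)).
  assert (Hseg : forall r, seg s t r -> I r).
  { intros r Hr. apply (HI s r t); auto. }
  assert (Hgeo' : geodesic_on d (seg s t) gam').
  { split. - intros x y z Hx Hz Hy. unfold seg in *. lra.
    - intros x y Hx Hy. unfold gam'. rewrite Hiso. apply Hgeo; auto. }
  assert (Hfar' : forall r u, seg s t r -> U u -> C <= d (gam' r) u).
  { intros r u Hr Hu. unfold gam'. rewrite Hdt.
    destruct (Rle_dec C (d (gam r) (act h u))) as [|Hn]; auto. exfalso.
    apply (Hfar r (Hseg r Hr)). intros eps Heps. exists (act h u). split; [|lra].
    destruct (HUo u Hu) as [g ->]. exists (mul h g). rewrite Hmul. reflexivity. }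
  destruct (Ns 1 Rlt_0_1) as [w [[u0 [Hu0 _]] _]].
  destruct (@proj_exists X d U Hm Hp Hcl (gam' s) u0 Hu0) as [px Hpx].
  destruct (@proj_exists X d U Hm Hp Hcl (gam' t) u0 Hu0) as [py Hpy].
  assert (Hdiam : d px py <= C).
  { apply (Hcon (seg s t) gam' Hgeo' Hfar').
    - exists s, (gam' s). split; [unfold seg; lra | split; auto].
    - exists t, (gam' t). split; [unfold seg; lra | split; auto]. }
  assert (Hnear : forall r p, nbhd d rhat (translate act h U) (gam r) -> proj d U (gam' r) p ->
                   d (gam' r) p <= rhat).
  { intros r p Nr [Hp1 Hp2]. destruct (Rle_dec (d (gam' r) p) rhat) as [|Hn]; auto.
    exfalso. destruct (Nr (d (gam' r) p - rhat)) as [w' [[u [Hu ->]] Hw]]; [lra|].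
    specialize (Hp2 u Hu). unfold gam' in Hp2. rewrite (Hdt u) in Hp2. unfold gam' in *. lra. }
  pose proof (Hnear s px Ns Hpx) as E1. pose proof (Hnear t py Nt Hpy) as E2.
  assert (E3 : d (gam s) (gam t) = d (gam' s) (gam' t)) by (unfold gam'; rewrite Hiso; auto).
  rewrite E3.
  pose proof (Ht (gam' s) px (gam' t)) as E4. pose proof (Ht px py (gam' t)) as E5.
  pose proof (Hs py (gam' t)) as E6. lra.
Qed.

Theorem lemma4p4 :
  forall (C rhat : R), 0 < C -> 0 < rhat ->
  exists L2 : R, 0 < L2 /\
  forall (X : Type) (d : X -> X -> R)
         (G : Type) (mul : G -> G -> G) (one : G) (inv : G -> G)
         (act : G -> X -> X) (o : X) (F : G -> Prop)
         (M a b : R) (gam : R -> X) (J : R -> Prop),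
    is_metric d -> is_proper d -> is_geodesic_space d ->
    is_group mul one inv ->
    isometric_action mul one d act ->
    (forall f, F f -> contracting_element mul one inv d act o f) ->
    (forall f, F f -> contracting d C (Ax mul one inv act o f)) ->
    C <= M ->
    a <= b -> geodesic_on d (seg a b) gam ->
    nbhd d M (orbit act o) (gam a) -> nbhd d M (orbit act o) (gam b) ->
    interval_component (fun t => seg a b t /\ ~ nbhd d M (orbit act o) (gam t)) J ->
    forall (h f : G), F f ->
      diam_le d
        (fun x => (exists t, J t /\ x = gam t) /\
                  nbhd d rhat (translate act h (Ax mul one inv act o f)) x)
        L2.
Proof.
  intros C rhat HC Hr. exists (2 * rhat + C). split; [lra|].
  intros X d G mul one inv act o F M a b gam J Hm Hp Hg Hgrp Hact HFc HFC HCM Hab Hgeo Ha Hb HJ h f Hf.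
  destruct HJ as [_ [HJi [HJS _]]].
  assert (HUo : forall u, Ax mul one inv act o f u -> orbit act o u).
  { intros u [g [_ ->]]. exists g. reflexivity. }
  assert (Hg' : forall r r', J r -> J r' -> d (gam r) (gam r') = Rabs (r - r')).
  { intros r r' Hr1 Hr2. apply (proj2 Hgeo); apply HJS; auto. }
  assert (Hfar : forall r, J r -> ~ nbhd d M (orbit act o) (gam r)).
  { intros r Hr1. apply HJS; auto. }
  intros x y [[s [Js ->]] Ns] [[t [Jt ->]] Nt].
  destruct (Rle_dec s t).
  - eapply core; eauto.
  - rewrite (proj1 (proj2 Hm)). eapply core; eauto. lra.
Qed.
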